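(* Let $k\ge 3$ be an integer and let $\Gamma$ be any graph in the family $M_{0,1,2,\ldots,k-1}$ (defined in the context). Then $\Gamma$ has a Fulkerson-cover.
   Context: All graphs are finite. A Fulkerson-cover of a cubic graph is a collection of six perfect matchings such that every edge belongs to exactly two of them. A cubic graph is cyclically 4-edge-connected if at least 4 edges must be removed to disconnect it into two components each containing a circuit. The family $M_{0,1,\ldots,k-1}$ ($k\ge 2$): Let $G_0,G_1,\ldots,G_{k-1}$ be bridgeless, cyclically 4-edge-connected cubic graphs, each having a Fulkerson-cover. In each $G_i$ choose an edge $x_iy_i$, let $x_i^0,x_i^1$ be the two neighbours of $x_i$ other than $y_i$, let $y_i^0,y_i^1$ be the two neighbours of $y_i$ other than $x_i$, and let $H_i=G_i\setminus\{x_i,y_i\}$ (delete the two vertices and their incident edges). The graph $\{G;G_0,\ldots,G_{k-1}\}$ is obtained from the disjoint union of $H_0,\ldots,H_{k-1}$ by adding new vertices $a_j,b_j,c_j$ for $0\le j\le k-1$ and $v_0,\ldots,v_{k-3}$ (none if $k=2$), and the following edges, with indices of $x$ taken modulo $k$: - for each $0\le j\le k-1$: $a_jy_j^0$, $a_jx_{j+1}^0$, $b_jy_j^1$, $b_jx_{j+1}^1$, $a_jc_j$, $b_jc_j$; - the edges of the path $c_1v_0v_1\cdots v_{k-3}c_0$ (for $k=2$ this is the single edge $c_0c_1$); - for each $2\le i\le k-1$: the edge $c_iv_{i-2}$. (Equivalently, it is built recursively: for $k=2$ take the graph above with edge $c_0c_1$; for $i=3,\ldots,k$, add $H_{i-1}$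 and $a_{i-1},b_{i-1},c_{i-1}$, subdivide the edge at $c_0$ not of the form $a_0c_0,b_0c_0$ by a new vertex $v_{i-3}$, join $c_{i-1}$ to $a_{i-1},b_{i-1},v_{i-3}$, make $a_{i-1}$ adjacent to $x_0^0,y_{i-1}^0$, $b_{i-1}$ adjacent to $x_0^1,y_{i-1}^1$, and replace the edges $a_{i-2}x_0^0$, $b_{i-2}x_0^1$ by $a_{i-2}x_{i-1}^0$, $b_{i-2}x_{i-1}^1$.) $M_{0,1,\ldots,k-1}$ denotes the set of all graphs obtained this way, over all such choices of $G_i$, edges $x_iy_i$ and labelings of neighbours. *)

(* Defs.v *)
From mathcomp Require Import all_boot.
Set Implicit Arguments.
Unset Strict Implicit.
Unset Printing Implicit Defensive.

Definition simple_graph (T : finType) (e : rel T) : Prop :=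
  symmetric e /\ irreflexive e.

Definition edges (T : finType) (e : rel T) : {set {set T}} :=
  [set E : {set T} | [exists u : T, exists v : T, e u v && (E == [set u; v])]].

Definition cubic (T : finType) (e : rel T) : Prop :=
  forall v : T, #|[set w | e v w]| = 3.

Definition perfect_matching (T : finType) (e : rel T) (M : {set {set T}}) : bool :=
  (M \subset edges e) && [forall v : T, #|[set E in M | v \in E]| == 1].

Definition fulkerson_cover (T : finType) (e : rel T) (M : 'I_6 -> {set {set T}}) : Prop :=
  (forall i, perfect_matching e (M i)) /\
  (forall E, E \in edges e -> #|[set i | E \in M i]| = 2).

Definition has_fulkerson_cover (T : finType) (e : rel T) : Prop :=
  exists M : 'I_6 -> {set {set T}}, fulkerson_cover e M.

Definition bridge (T : finType) (e : rel T) (u v : T) : bool :=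
  e u v && ~~ connect (fun a b => e a b && ([set a; b] != [set u; v])) u v.

Definition bridgeless (T : finType) (e : rel T) : Prop :=
  forall u v : T, ~~ bridge e u v.

Definition has_circuit (T : finType) (e : rel T) (S : {set T}) : Prop :=
  exists c : seq T, [/\ 3 <= size c, uniq c, all (fun v => v \in S) c & cycle e c].

Definition edge_cut (T : finType) (e : rel T) (S : {set T}) : {set {set T}} :=
  [set E in edges e | (E :&: S != set0) && (E :\: S != set0)].

Definition cyclically_4_edge_connected (T : finType) (e : rel T) : Prop :=
  forall S : {set T}, has_circuit e S -> has_circuit e (~: S) -> 4 <= #|edge_cut e S|.

(* Vertices of H_i = G_i \ {x_i, y_i}, all i together. *)
Definition Hpred (k : nat) (V : 'I_k -> finType) (x y : forall i, V i)
  (v : {i : 'I_k & V i}) : bool :=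
  (tagged v != x (tag v)) && (tagged v != y (tag v)).

Definition Hvert (k : nat) (V : 'I_k -> finType) (x y : forall i, V i) : finType :=
  {v : {i : 'I_k & V i} | Hpred x y v}.

(* Vertex type of the constructed graph:
     inl (inl h)      : vertex h of some H_i,
     inl (inr (j, 0)) : a_j,  inl (inr (j, 1)) : b_j,  inl (inr (j, 2)) : c_j,
     inr m            : v_m  (0 <= m <= k-3). *)
Definition Mvert (k : nat) (V : 'I_k -> finType) (x y : forall i, V i) : finType :=
  ((Hvert x y + ('I_k * 'I_3)) + 'I_(k - 2))%type.

Definition Mbase (k : nat) (V : 'I_k -> finType) (g : forall i, rel (V i))
  (x y x0 x1 y0 y1 : forall i, V i) (u w : Mvert x y) : bool :=
  match u, w with
  | inl (inl h), inl (inl h') =>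
      (tag (val h) == tag (val h')) &&
      g (tag (val h)) (tagged (val h)) (tagged_as (val h) (val h'))
  | inl (inl h), inl (inr (j, t)) =>
      (* a_j y_j^0, a_j x_{j+1}^0, b_j y_j^1, b_j x_{j+1}^1 *)
      ((t == 0 :> nat) &&
         ((val h == Tagged V (y0 j)) || (val h == Tagged V (x0 (ordS j))))) ||
      ((t == 1 :> nat) &&
         ((val h == Tagged V (y1 j)) || (val h == Tagged V (x1 (ordS j)))))
  | inl (inr (j, t)), inl (inr (j', t')) =>
      (* a_j c_j, b_j c_j, and (only when k = 2) c_0 c_1 *)
      ((j == j') && (t == 0 :> nat) && (t' == 2 :> nat)) ||
      ((j == j') && (t == 1 :> nat) && (t' == 2 :> nat)) ||
      [&& k == 2, t == 2 :> nat, t' == 2 :> nat & j != j']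
  | inl (inr (j, t)), inr m =>
      (* c_1 v_0, v_{k-3} c_0, and c_i v_{i-2} for 2 <= i <= k-1 *)
      (t == 2 :> nat) &&
      [|| (j == 1 :> nat) && (m == 0 :> nat),
          (j == 0 :> nat) && (m == k - 3 :> nat)
        | (2 <= j) && (m == j - 2 :> nat)]
  | inr m, inr m' =>
      (m.+1 == m' :> nat)
  | _, _ => false
  end.

Definition Mgraph (k : nat) (V : 'I_k -> finType) (g : forall i, rel (V i))
  (x y x0 x1 y0 y1 : forall i, V i) : rel (Mvert x y) :=
  fun u w => Mbase g x0 x1 y0 y1 u w || Mbase g x0 x1 y0 y1 w u.
Arguments Mgraph {k V} g x y x0 x1 y0 y1 _ _.

(* Main.v *)
Require Import Defs.
From mathcomp Require Import all_boot perm zify.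
Set Implicit Arguments. Unset Strict Implicit. Unset Printing Implicit Defensive.

Lemma set2_eqE (T : finType) (a b c d : T) : a != b ->
  [set a; b] = [set c; d] -> (a = c /\ b = d) \/ (a = d /\ b = c).
Proof.
move=> ab E.
have ha : a \in [set c; d] by rewrite -E !inE eqxx.
have hb : b \in [set c; d] by rewrite -E !inE eqxx orbT.
have hc : c \in [set a; b] by rewrite E !inE eqxx.
have hd : d \in [set a; b] by rewrite E !inE eqxx orbT.
move: ha hb; rewrite !inE => /orP[/eqP ea|/eqP ea] /orP[/eqP eb|/eqP eb].
- by move: ab; rewrite ea eb eqxx.
- by left.
- by right.
- by move: ab; rewrite ea eb eqxx.
Qed.

Section Gen.
Variables (T : finType) (e : rel T).
Hypotheses (esymm : symmetric e) (eirr : irreflexive e).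

Definition PMof (p : T -> T) : {set {set T}} := [set [set v; p v] | v : T].

Lemma PMofP p : involutive p -> (forall v, e v (p v)) ->
  forall u w, u != w -> ([set u; w] \in PMof p) = (p u == w).
Proof.
move=> pinv padj u w uw; apply/imsetP/eqP => [[v _ E]|<-]; last by exists u.
case: (set2_eqE uw E) => [[-> ->] //|[-> ->]]; by rewrite pinv.
Qed.

Lemma edge_neq u w : e u w -> u != w.
Proof. by apply: contraTneq => ->; rewrite eirr. Qed.

Lemma PMof_pm p : involutive p -> (forall v, e v (p v)) -> perfect_matching e (PMof p).
Proof.
move=> pinv padj; apply/andP; split.
  apply/subsetP => E /imsetP[v _ ->]; rewrite inE.
  by apply/existsP; exists v; apply/existsP; exists (p v); rewrite padj eqxx.
apply/forallP => v; apply/cards1P; exists [set v; p v].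
apply/setP => E; rewrite !inE; apply/andP/eqP => [[/imsetP[w _ ->]]|->].
  rewrite !inE => /orP[/eqP->//|/eqP->]; by rewrite pinv setUC.
by split; [apply: imset_f | rewrite !inE eqxx].
Qed.

Definition ptn (M : {set {set T}}) (v : T) : T :=
  odflt v [pick w | [set v; w] \in M].

Lemma edges_neq E : E \in edges e -> exists u w, [/\ e u w, u != w & E = [set u; w]].
Proof.
rewrite inE => /existsP[u /existsP[w /andP[euw /eqP->]]].
by exists u, w; split => //; apply: edge_neq.
Qed.

Section PM.
Variable M : {set {set T}}.
Hypothesis pmM : perfect_matching e M.

Lemma pm_ex v : exists w, [set v; w] \in M.
Proof.
case/andP: pmM => sub /forallP/(_ v)/cards1P[E HE].
have : E \in [set E in M | v \in E] by rewrite HE inE.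
rewrite inE => /andP[EM vE].
have [u [w [_ uw Ew]]] := edges_neq (subsetP sub _ EM).
move: vE; rewrite Ew !inE => /orP[/eqP->|/eqP->]; first by exists w; rewrite -Ew.
by exists u; rewrite setUC -Ew.
Qed.

Lemma pm_uniq v w w' : [set v; w] \in M -> [set v; w'] \in M -> w = w'.
Proof.
case/andP: pmM => sub /forallP/(_ v)/cards1P[E HE] h1 h2.
have e1 : [set v; w] \in [set E in M | v \in E] by rewrite inE h1 !inE eqxx.
have e2 : [set v; w'] \in [set E in M | v \in E] by rewrite inE h2 !inE eqxx.
move: e1 e2; rewrite HE !inE => /eqP e1 /eqP e2.
have [a [b [_ ab Eab]]] := edges_neq (subsetP sub _ h1).
have vw : v != w.
  apply: contraNneq ab => vw; move: Eab; rewrite -vw setUid => Eab.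
  have ha : a \in [set v] by rewrite Eab !inE eqxx.
  have hb : b \in [set v] by rewrite Eab !inE eqxx orbT.
  by move: ha hb; rewrite !inE => /eqP-> /eqP->.
by case: (set2_eqE vw (etrans e1 (esym e2))) => [[_ ->]|[-> ->]].
Qed.

Lemma ptn_in v : [set v; ptn M v] \in M.
Proof.
rewrite /ptn; case: pickP => [w //|H]; have [w Hw] := pm_ex v.
by move: (H w); rewrite Hw.
Qed.

Lemma ptnE v w : [set v; w] \in M -> ptn M v = w.
Proof. by move=> h; apply: (pm_uniq (ptn_in v) h). Qed.

Lemma ptn_inv : involutive (ptn M).
Proof. by move=> v; apply: ptnE; rewrite setUC ptn_in. Qed.

Lemma ptn_adj v : e v (ptn M v).
Proof.
case/andP: pmM => sub _.
have [u [w [euw uw E]]] := edges_neq (subsetP sub _ (ptn_in v)).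
have vv : v != ptn M v.
  apply/negP => /eqP h. have := ptn_in v. rewrite -h setUid => h2.
  have [a [b [_ ab Eab]]] := edges_neq (subsetP sub _ h2).
  have ha : a \in [set v] by rewrite Eab !inE eqxx.
  have hb : b \in [set v] by rewrite Eab !inE eqxx orbT.
  by move: ha hb ab; rewrite !inE => /eqP-> /eqP->; rewrite eqxx.
by case: (set2_eqE vv E) => [[-> ->]|[-> ->]] //; rewrite esymm.
Qed.

Lemma ptnP u w : u != w -> ([set u; w] \in M) = (ptn M u == w).
Proof.
move=> uw; apply/idP/eqP => [/ptnE //|<-]; exact: ptn_in.
Qed.
End PM.

Lemma fulk_of (P : 'I_6 -> T -> T) :
  (forall m, involutive (P m)) -> (forall m v, e v (P m v)) ->
  (forall u w, e u w -> #|[set m | P m u == w]| = 2) -> has_fulkerson_cover e.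
Proof.
move=> Pinv Padj Pcnt; exists (fun m => PMof (P m)); split => [m|E].
  exact: PMof_pm.
move=> /edges_neq[u [w [euw uw ->]]].
have -> : [set m | [set u; w] \in PMof (P m)] = [set m | P m u == w].
  by apply/setP => m; rewrite !inE PMofP.
exact: Pcnt.
Qed.
End Gen.

Definition ty_t := option (bool * bool).
Definition expct (X : ty_t) (a : nat) : nat :=
  if X is Some (al, be) then (if al == be then a else 2 - a) else 2.

Definition Dpat (cp c cn a : nat) (op oc : bool) (m : nat) : ty_t :=
  let cm := m %/ 2 in let b := odd m in
  if cm == c then None
  else if cp != cn then
    (if cm == cn then Some (~~ (op (+) b), ~~ (op (+) b) (+) (a == 0))
     else Some ((oc (+) b) (+) (a != 2), oc (+) b))
  else if cm == cp then Some (b, b (+) ((a == 0) || ((a == 1) && (~~ op == oc))))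
  else Some (~~ (op (+) b), oc (+) b).

Definition Dgood cp c cn a op oc : bool :=
  [&& all (fun m => (Dpat cp c cn a op oc m == None) == (m %/ 2 == c)) (iota 0 6),
      all (fun m => (m %/ 2 != c) ==> (m %/ 2 != cn) ==>
          (if Dpat cp c cn a op oc m is Some (_, be) then be == oc (+) odd m else false)) (iota 0 6),
      all (fun m => (m %/ 2 != c) ==> (m %/ 2 != cp) ==>
          (if Dpat cp c cn a op oc m is Some (al, _) then al == ~~ (op (+) odd m) else false)) (iota 0 6) &
      all (fun X => count (fun m => Dpat cp c cn a op oc m == X) (iota 0 6) == expct X a)
        [:: None; Some (false, false); Some (false, true); Some (true, false); Some (true, true)]].

Lemma Dcheck : all (fun cp => all (fun c => all (fun cn => all (fun a =>
   all (fun op => all (fun oc =>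
     (cp != c) ==> (cn != c) ==>
     ((cp == cn) ==> ((a == 2) ==> (oc == ~~ op)) && ((a == 0) ==> (oc == op))) ==>
     Dgood cp c cn a op oc) [:: true; false]) [:: true; false])
   (iota 0 3)) (iota 0 3)) (iota 0 3)) (iota 0 3).
Proof. by vm_compute. Qed.

Lemma Dgood_of cp c cn a op oc : cp < 3 -> c < 3 -> cn < 3 -> a < 3 ->
  cp != c -> cn != c ->
  (cp == cn -> (a == 2 -> oc = ~~ op) /\ (a == 0 -> oc = op)) ->
  Dgood cp c cn a op oc.
Proof.
move=> hcp hc hcn ha n1 n2 h3.
have mi n : n < 3 -> n \in iota 0 3 by rewrite mem_iota.
have H := Dcheck.
move/allP: H => /(_ cp (mi _ hcp)) /allP /(_ c (mi _ hc)) /allP /(_ cn (mi _ hcn)) /allP /(_ a (mi _ ha)).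
have mb (b : bool) : b \in [:: true; false] by case: b.
move/allP => /(_ op (mb op)) /allP /(_ oc (mb oc)).
rewrite n1 n2 /= => /implyP; apply; apply/implyP => /h3 [h4 h5].
by apply/andP; split; apply/implyP => hh; [rewrite (h4 hh) | rewrite (h5 hh)].
Qed.

Section Main.
Local Unset Implicit Arguments.
Variables (n : nat) (V : 'I_(n.+3) -> finType) (g : forall i, rel (V i))
  (x y x0 x1 y0 y1 : forall i, V i).
Local Notation k := n.+3.
Hypotheses (gsym : forall i : 'I_k, symmetric (g i)) (girr : forall i : 'I_k, irreflexive (g i)).
Hypothesis Nx : forall i w, g i (x i) w = (w \in [set y i; x0 i; x1 i]).
Hypothesis Ny : forall i w, g i (y i) w = (w \in [set x i; y0 i; y1 i]).
Hypothesis dx : forall i, [/\ y i != x0 i, y i != x1 i & x0 i != x1 i].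
Hypothesis dy : forall i, [/\ x i != y0 i, x i != y1 i & y0 i != y1 i].
Variable p : forall i, 'I_6 -> V i -> V i.
Hypothesis pinv : forall i l, involutive (p i l).
Hypothesis padj : forall i l w, g i w (p i l w).
Hypothesis pcnt : forall i u w, g i u w -> #|[set l | p i l u == w]| = 2.
Local Set Implicit Arguments.

Lemma gxy i : g i (x i) (y i). Proof. by rewrite Nx !inE eqxx. Qed.
Lemma gneq i u w : g i u w -> u != w.
Proof. by apply: contraTneq => ->; rewrite girr. Qed.
Lemma xy_neq i : x i != y i. Proof. exact: gneq (gxy i). Qed.

Definition xb i (b : bool) := if b then x1 i else x0 i.
Definition yb i (b : bool) := if b then y1 i else y0 i.

Lemma gxb i b : g i (x i) (xb i b). Proof. by rewrite Nx /xb; case: b; rewrite !inE eqxx ?orbT. Qed.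
Lemma gyb i b : g i (y i) (yb i b). Proof. by rewrite Ny /yb; case: b; rewrite !inE eqxx ?orbT. Qed.

Lemma xb_neq_x i b : xb i b != x i. Proof. by rewrite eq_sym; apply: gneq (gxb i b). Qed.
Lemma yb_neq_y i b : yb i b != y i. Proof. by rewrite eq_sym; apply: gneq (gyb i b). Qed.
Lemma xb_neq_y i b : xb i b != y i.
Proof. by case: (dx i) => a1 a2 _; rewrite /xb; case: b; rewrite eq_sym. Qed.
Lemma yb_neq_x i b : yb i b != x i.
Proof. by case: (dy i) => a1 a2 _; rewrite /yb; case: b; rewrite eq_sym. Qed.
Lemma xb_eq i b b' : (xb i b == xb i b') = (b == b').
Proof. by case: (dx i) => _ _ d; rewrite /xb; case: b; case: b'; rewrite /= ?eqxx // ?(negbTE d) // eq_sym (negbTE d). Qed.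
Lemma yb_eq i b b' : (yb i b == yb i b') = (b == b').
Proof. by case: (dy i) => _ _ d; rewrite /yb; case: b; case: b'; rewrite /= ?eqxx // ?(negbTE d) // eq_sym (negbTE d). Qed.

Lemma nbx i w : g i (x i) w -> w != y i -> w = xb i (w == x1 i).
Proof.
rewrite Nx !inE => h hy; move: h; rewrite (negbTE hy) /= => /orP[]/eqP->; rewrite /xb ?eqxx //.
by case: (dx i) => _ _ d; rewrite (negbTE d).
Qed.
Lemma nby i w : g i (y i) w -> w != x i -> w = yb i (w == y1 i).
Proof.
rewrite Ny !inE => h hx; move: h; rewrite (negbTE hx) /= => /orP[]/eqP->; rewrite /yb ?eqxx //.
by case: (dy i) => _ _ d; rewrite (negbTE d).
Qed.

Definition ty i l : ty_t :=
  if p i l (x i) == y i then None else Some (p i l (x i) == x1 i, p i l (y i) == y1 i).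
Definition xa i l b := if ty i l is Some (al, _) then al == b else false.
Definition ya i l b := if ty i l is Some (_, be) then be == b else false.

Lemma tyN i l : (ty i l == None) = (p i l (x i) == y i).
Proof. by rewrite /ty; case: (p i l (x i) == y i). Qed.

Lemma xaE i l b : xa i l b = (p i l (x i) == xb i b).
Proof.
rewrite /xa /ty; case: eqP => [->|hy]; first by rewrite eq_sym (negbTE (xb_neq_y i b)).
have := nbx (padj i l (x i)) (introN eqP hy).
set w := p i l (x i) => e; by rewrite {2}e xb_eq.
Qed.

Lemma yaE i l b : ya i l b = (p i l (y i) == yb i b).
Proof.
rewrite /ya /ty; case: eqP => [hy|hy].
  by rewrite -hy pinv eq_sym (negbTE (yb_neq_x i b)).
have hx : p i l (y i) != x i by apply: contra_not_neq hy => <-; rewrite pinv.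
have := nby (padj i l (y i)) hx.
set w := p i l (y i) => e; by rewrite {2}e yb_eq.
Qed.

Definition acnt i := #|[set l | ty i l == Some (false, false)]|.

Lemma card_split (P Q : pred 'I_6) :
  #|[set l | P l]| = #|[set l | P l && Q l]| + #|[set l | P l && ~~ Q l]|.
Proof.
rewrite -(cardsID [set l | Q l] [set l | P l]); congr (_ + _); apply: eq_card => l;
by rewrite !inE // andbC.
Qed.

Lemma ty_count i X : #|[set l | ty i l == X]| = expct X (acnt i) /\ acnt i <= 2.
Proof.
have cx b : #|[set l | xa i l b]| = 2.
  by apply: etrans (pcnt _ _ _ (gxb i b)); apply: eq_card => l; rewrite !inE xaE.
have cy b : #|[set l | ya i l b]| = 2.
  by apply: etrans (pcnt _ _ _ (gyb i b)); apply: eq_card => l; rewrite !inE yaE.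
have cn : #|[set l | ty i l == None]| = 2.
  by apply: etrans (pcnt _ _ _ (gxy i)); apply: eq_card => l; rewrite !inE tyN.
have nn al be : #|[set l | ty i l == Some (al, be)]| = #|[set l | xa i l al && ya i l be]|.
  apply: eq_card => l; rewrite !inE /xa /ya; case: (ty i l) => [[a b]|] //.
have sx al : #|[set l | xa i l al]| = #|[set l | ty i l == Some (al, false)]| + #|[set l | ty i l == Some (al, true)]|.
  rewrite (card_split _ (ya i ^~ false)) !nn; congr (_ + _); apply: eq_card => l; rewrite !inE /xa /ya;
  by case: (ty i l) => [[a b]|] //; case: b; case: al; case: a.
have sy be : #|[set l | ya i l be]| = #|[set l | ty i l == Some (false, be)]| + #|[set l | ty i l == Some (true, be)]|.
  rewrite (card_split _ (xa i ^~ false)) !nn; congr (_ + _); apply: eq_card => l; rewrite !inE /xa /ya;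
  by case: (ty i l) => [[a b]|] //; case: a; case: be; case: b.
move: (sx false) (sx true) (sy false) (sy true); rewrite !cx !cy /acnt.
case: X => [[[] []]|] /=;
set a00 := #|[set l | ty i l == Some (false,false)]|; set a01 := #|[set l | ty i l == Some (false,true)]|;
set a10 := #|[set l | ty i l == Some (true,false)]|; set a11 := #|[set l | ty i l == Some (true,true)]|;
clearbody a00 a01 a10 a11; try lia; rewrite cn; lia.
Qed.

Lemma val_ordS (i : 'I_k) : (ordS i : nat) = if i.+1 == k then 0 else i.+1.
Proof.
rewrite /ordS /=; case: eqP => [->|h]; first by rewrite modnn.
by rewrite modn_small //; have := ltn_ord i; lia.
Qed.

Lemma val_ordP (i : 'I_k) : (ord_pred i : nat) = if i == 0 :> nat then k.-1 else i.-1.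
Proof.
rewrite /ord_pred /=; case: eqP => [->|h]; first by rewrite add0n modn_small.
have -> : (i + k).-1 = i.-1 + k by lia.
by rewrite modnDr modn_small //; have := ltn_ord i; lia.
Qed.

Definition cls (i : nat) : nat :=
  if i == 1 then 2 else if i == 0 then (if odd k then 0 else 1) else if odd i then 0 else 1.

Lemma cls_lt i : cls i < 3.
Proof. by rewrite /cls; case: (i == 1) => //; case: (i == 0); case: (odd _). Qed.

Lemma cls_adj (i : 'I_k) : cls i != cls (ordS i).
Proof.
rewrite val_ordS; case: i => i hi /=.
case: i hi => [|[|i]] hi.
- by rewrite /cls /=; case: (odd n).
- by rewrite /cls /=.
case: (i.+3 =P k) => [[e]|ne].
  by subst i; rewrite /cls /=; case: (odd n).
by rewrite /cls /=; case: (odd i).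
Qed.

Lemma cls_adjP (i : 'I_k) : cls (ord_pred i) != cls i.
Proof. by have := cls_adj (ord_pred i); rewrite ord_predK. Qed.

Fixpoint oo (j : nat) : bool :=
  if j is j'.+1 then oo j' (+) (acnt (inord j) == 2) else false.

Definition D (i : 'I_k) (m : 'I_6) : ty_t :=
  Dpat (cls (ord_pred i)) (cls i) (cls (ordS i)) (acnt i) (oo (ord_pred i)) (oo i) m.

Lemma Dgood_i (i : 'I_k) :
  Dgood (cls (ord_pred i)) (cls i) (cls (ordS i)) (acnt i) (oo (ord_pred i)) (oo i).
Proof.
have ha : acnt i < 3 by case: (ty_count i None).
apply: Dgood_of; [exact: cls_lt|exact: cls_lt|exact: cls_lt|exact: ha|exact: cls_adjP|rewrite eq_sym; exact: cls_adj|].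
rewrite val_ordP val_ordS; case: (val i =P 0) => [->|i0].
  by rewrite /cls /=; case: (odd n).
case: i i0 ha => [[|i] hi] //= _ ha _.
have -> : @inord n.+2 i.+1 = Ordinal hi by apply: val_inj; rewrite /= inordK.
by split => /eqP ->; rewrite ?addbT ?addbF.
Qed.

Lemma mem6 (m : 'I_6) : (m : nat) \in iota 0 6. Proof. by rewrite mem_iota ltn_ord. Qed.

Lemma D_none (i : 'I_k) (m : 'I_6) : (D i m == None) = (m %/ 2 == cls i).
Proof. by case/and4P: (Dgood_i i) => /allP /(_ _ (mem6 m)) /eqP. Qed.

Lemma D_R (i : 'I_k) (m : 'I_6) : m %/ 2 != cls i -> m %/ 2 != cls (ordS i) ->
  if D i m is Some (_, be) then be == oo i (+) odd m else false.
Proof. by case/and4P: (Dgood_i i) => _ /allP /(_ _ (mem6 m)) /implyP h _ _ /h /implyP. Qed.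

Lemma D_L (i : 'I_k) (m : 'I_6) : m %/ 2 != cls i -> m %/ 2 != cls (ord_pred i) ->
  if D i m is Some (al, _) then al == ~~ (oo (ord_pred i) (+) odd m) else false.
Proof. by case/and4P: (Dgood_i i) => _ _ /allP /(_ _ (mem6 m)) /implyP h _ /h /implyP. Qed.

Lemma D_C2 (j : 'I_k) (m : 'I_6) al be be' : D j m = Some (al, be) -> D (ordS j) m = Some (be, be') -> False.
Proof.
move=> h1 h2.
have n1 : m %/ 2 != cls j by rewrite -D_none h1.
have n2 : m %/ 2 != cls (ordS j) by rewrite -D_none h2.
have := D_R n1 n2; have := @D_L (ordS j) m n2; rewrite ordSK => /(_ n1).
by rewrite h1 h2 => /eqP -> /eqP; case: (oo j (+) odd m).
Qed.

Lemma c6' (Q : pred 'I_6) : #|[set l | Q l]| = count Q (enum 'I_6).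
Proof. by rewrite cardsE cardE [in LHS]/enum_mem size_filter -enumT. Qed.

Lemma D_count (i : 'I_k) X : count (fun m => D i m == X) (enum 'I_6) = expct X (acnt i).
Proof.
have -> : count (fun m => D i m == X) (enum 'I_6) =
          count (fun m => Dpat (cls (ord_pred i)) (cls i) (cls (ordS i)) (acnt i)
                 (oo (ord_pred i)) (oo i) m == X) (iota 0 6).
  by rewrite -val_enum_ord count_map.
case/and4P: (Dgood_i i) => _ _ _ /allP H.
by apply/eqP; apply: H; case: X => [[[] []]|]; rewrite !inE.
Qed.

Lemma sg_exists (i : 'I_k) :
  exists s : 'I_6 -> 'I_6, injective s /\ forall m, ty i (s m) = D i m.
Proof.
set t := [tuple ty i l | l < 6].
set s := [seq D i m | m <- enum 'I_6].
have pe : perm_eq s t.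
  apply/allP => X _; rewrite /s /t /= !count_map -!enumT.
  rewrite (eq_count (a2 := fun m => D i m == X)) // D_count.
  rewrite (eq_count (a2 := fun l => ty i l == X)) //.
  by rewrite -c6'; case: (ty_count i X) => ->.
case/tuple_permP: pe => q E.
exists q; split; first exact: perm_inj.
move=> m; have := congr1 (fun s => nth None s m) E.
rewrite /s (nth_map ord0) ?size_enum_ord // nth_ord_enum => ->.
by rewrite -tnth_nth tnth_mktuple /t tnth_mktuple.
Qed.

Lemma c6 (P : pred nat) : #|[set m : 'I_6 | P m]| = count P (iota 0 6).
Proof. by rewrite cardsE cardE /enum_mem size_filter -enumT -val_enum_ord count_map. Qed.

Local Unset Implicit Arguments.
Variable sg : forall i : 'I_k, 'I_6 -> 'I_6.
Hypothesis sg_inj : forall i, injective (sg i).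
Hypothesis sg_ty : forall i m, ty i (sg i m) = D i m.

Definition pp i m := p i (sg i m).
Definition yact (j : 'I_k) m b := if D j m is Some (_, be) then be == b else false.
Definition xact (j : 'I_k) m b := if D j m is Some (al, _) then al == b else false.

Lemma yactE j m b : yact j m b = (pp j m (y j) == yb j b).
Proof. by rewrite /pp -yaE /ya sg_ty. Qed.
Lemma xactE j m b : xact j m b = (pp j m (x j) == xb j b).
Proof. by rewrite /pp -xaE /xa sg_ty. Qed.

Lemma act_C2 j m b : yact j m b -> xact (ordS j) m b -> False.
Proof.
rewrite /yact /xact; case E1: (D j m) => [[al be]|] //; case E2: (D (ordS j) m) => [[al' be']|] //.
by move=> /eqP h1 /eqP h2; apply: (D_C2 E1); rewrite E2 h1 h2.
Qed.

Lemma sg_card i (P : pred 'I_6) : #|[set m | P (sg i m)]| = #|[set l | P l]|.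
Proof.
rewrite -(card_preimset [set l | P l] (sg_inj i)); apply: eq_card => m.
by rewrite !inE.
Qed.

Definition HS := {v : {i : 'I_k & V i} | Hpred x y v}.
Definition MV := Mvert x y.
Definition gad (j : 'I_k) (t : 'I_3) : MV := inl (inr (j, t)).
Definition t0 : 'I_3 := @Ordinal 3 0 isT.
Definition t1 : 'I_3 := @Ordinal 3 1 isT.
Definition t2 : 'I_3 := @Ordinal 3 2 isT.
Definition tb (b : bool) := if b then t1 else t0.
Definition hv (i : 'I_k) (w : V i) : MV :=
  if (insub (Tagged V w) : option HS) is Some h then inl (inl h) else gad i t0.
Definition cj (j : nat) : MV := gad (inord j) t2.
Definition vv (q : nat) : MV := inr (@inord n q).

Definition Phw m (i : 'I_k) (w : V i) : MV :=
  let q := pp i m w in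
  if (insub (Tagged V q) : option HS) is Some h then inl (inl h)
  else if q == x i then gad (ord_pred i) (tb (w == x1 i)) else gad i (tb (w == y1 i)).

Definition Pab m j b : MV :=
  if yact j m b then hv j (yb j b)
  else if xact (ordS j) m b then hv (ordS j) (xb (ordS j) b) else gad j t2.
Definition aout j m b := yact j m b || xact (ordS j) m b.
Definition Tc (c j : nat) : MV := vv (if c == 2 then j - 2 else if j == 1 then 0 else k - 3).
Definition lowN q := if q == 0 then cj 1 else vv q.-1.
Definition highN q := if q.+1 == k - 2 then cj 0 else vv q.+1.
Definition Tv (c q : nat) : MV :=
  if c == 2 then cj q.+2 else if odd q == (c == 1) then lowN q else highN q.
Definition Pc m j : MV :=
  if ~~ aout j m false then gad j t0 else if ~~ aout j m true then gad j t1
  else Tc (m %/ 2) j.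

Definition P (m : 'I_6) (u : MV) : MV :=
  match u with
  | inl (inl h) => Phw m (tag (val (h : HS))) (tagged (val (h : HS)))
  | inl (inr (j, t)) => if val t == 0 then Pab m j false
                       else if val t == 1 then Pab m j true else Pc m j
  | inr q => Tv (m %/ 2) q
  end.

Definition valid (i : 'I_k) (w : V i) := (w != x i) && (w != y i).

Lemma hvE i w (hw : valid i w) : hv i w = inl (inl (exist _ (Tagged V w) hw : HS)).
Proof. by rewrite /hv insubT. Qed.

Lemma P_hv m i w : valid i w -> P m (hv i w) = Phw m i w.
Proof. by move=> hw; rewrite hvE. Qed.

Lemma hvK (h : HS) : hv (tag (val h)) (tagged (val h)) = inl (inl h).
Proof. by case: h => [[i w] hw]; rewrite hvE. Qed.

Lemma xb_valid i b : valid i (xb i b).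
Proof. by rewrite /valid xb_neq_x xb_neq_y. Qed.
Lemma yb_valid i b : valid i (yb i b).
Proof. by rewrite /valid yb_neq_x yb_neq_y. Qed.

Lemma Phw_in m i w : valid i (pp i m w) -> Phw m i w = hv i (pp i m w).
Proof. by move=> hq; rewrite /Phw /hv insubT. Qed.

Lemma Phw_x m i w : pp i m w = x i -> Phw m i w = gad (ord_pred i) (tb (w == x1 i)).
Proof. by move=> e; rewrite /Phw e insubF /= ?eqxx // /Hpred /= eqxx. Qed.

Lemma Phw_y m i w : pp i m w = y i -> Phw m i w = gad i (tb (w == y1 i)).
Proof.
move=> e; rewrite /Phw e insubF /=; last by rewrite /Hpred /= eqxx andbF.
by rewrite eq_sym (negbTE (xy_neq i)).
Qed.

Lemma ordP_neq (j : 'I_k) : ord_pred j != j.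
Proof. apply/eqP => E; have := congr1 (@nat_of_ord k) E; rewrite val_ordP; case: (nat_of_ord j =P 0) => [->|h] /=; lia. Qed.
Lemma ordS_neq (j : 'I_k) : ordS j != j.
Proof. by apply/eqP => e; move: (ordP_neq (ordS j)); rewrite ordSK e eqxx. Qed.

Lemma P_gad m j b : P m (gad j (tb b)) = Pab m j b.
Proof. by case: b. Qed.
Lemma P_gad2 m j : P m (gad j t2) = Pc m j.
Proof. by []. Qed.

Lemma Tagged_inj i (w w' : V i) : Tagged V w = Tagged V w' -> w = w'.
Proof. by move=> /(congr1 (tagged_as (Tagged V w))); rewrite !tagged_asE. Qed.

Lemma hv_inj i a b : valid i a -> valid i b -> (hv i a == hv i b) = (a == b).
Proof.
move=> ha hb; case: (a =P b) => [->|nab]; first by rewrite !eqxx.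
apply/negbTE/eqP; rewrite (hvE _ _ ha) (hvE _ _ hb) => [[E]]; apply: nab.
exact: Tagged_inj.
Qed.

Lemma x_or (i : 'I_k) w : g i w (x i) -> w != y i -> (w == x0 i) || (w == x1 i).
Proof. by rewrite gsym Nx !inE => /orP[/orP[->|->]|->] //; rewrite orbT. Qed.
Lemma y_or (i : 'I_k) w : g i w (y i) -> w != x i -> (w == y0 i) || (w == y1 i).
Proof. by rewrite gsym Ny !inE => /orP[/orP[->|->]|->] //; rewrite orbT. Qed.

Lemma not_valid_xy i w : ~~ valid i w -> (w == x i) || (w == y i).
Proof. by rewrite /valid negb_and !negbK. Qed.

Lemma aout_both (j : 'I_k) (m : 'I_6) : aout j m false -> aout j m true ->
  (m %/ 2 != cls j) && (m %/ 2 != cls (ordS j)).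
Proof.
rewrite -!D_none /aout /yact /xact.
case: (D j m) => [[al be]|]; case: (D (ordS j) m) => [[al' be']|] //=.
- by case: be.
- by case: al'.
Qed.

Lemma active_aout (j : 'I_k) (m : 'I_6) : m %/ 2 != cls j -> m %/ 2 != cls (ordS j) ->
  aout j m false && aout j m true.
Proof.
rewrite -!D_none /aout /yact /xact.
case E1: (D j m) => [[al be]|] //; case E2: (D (ordS j) m) => [[al' be']|] // _ _.
have : be != al' by apply/eqP => e; apply: (D_C2 E1); rewrite E2 e.
by case: (be); case: (al').
Qed.

Lemma aout_false_or (j : 'I_k) (m : 'I_6) : ~~ aout j m true -> aout j m false.
Proof.
have h1 := D_none j m; have h2 := D_none (ordS j) m; have := cls_adj j.
rewrite /aout /yact /xact.
case: (D j m) h1 => [[al be]|] h1; case: (D (ordS j) m) h2 => [[al' be']|] h2 //=.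
- by case: (be); case: (al').
- by case: (be).
- by case: (al').
- by move: h1 h2 => /esym/eqP <- /esym/eqP <-; rewrite eqxx.
Qed.

Lemma vv_val (q : 'I_n.+1) (r : nat) : r = q -> vv r = inr q.
Proof. by move=> ->; rewrite /vv inord_val. Qed.
Lemma cj_val (j : 'I_k) (r : nat) : r = j -> cj r = gad j t2.
Proof. by move=> ->; rewrite /cj inord_val. Qed.
Lemma cls_ge2 i : 2 <= i -> cls i = (if odd i then 0 else 1).
Proof. by case: i => [|[|i]]. Qed.
Lemma cls0 : cls 0 = if odd n then 1 else 0.
Proof. by rewrite /cls /=; case: (odd n). Qed.
Lemma cls1 : cls 1 = 2. Proof. by []. Qed.

Lemma TT2 (c : nat) (j : 'I_k) : c < 3 -> c != cls j -> c != cls (ordS j) ->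
  exists q : 'I_n.+1, Tc c j = inr q /\ Tv c q = gad j t2.
Proof.
rewrite val_ordS; case: j => j hj /=.
have Ej : forall r, r = j -> cj r = gad (Ordinal hj) t2 by move=> r e; exact: (cj_val (Ordinal hj) r e).
case: c => [|[|[|c]]] // _.
-
  case: j hj Ej => [|[|j]] hj Ej /=.
  + rewrite cls0; case on: (odd n) => // _ _.
    exists ord_max; split; first by apply: vv_val; rewrite /= subSS subSS subn1.
    by rewrite /Tv /= on /= /highN eqxx -(Ej 0).
  + move=> _ _; exists ord0; split; first by apply: vv_val.
    by rewrite /Tv /= /lowN /= -(Ej 1).
  + rewrite (cls_ge2 j.+2) //; case: (j.+3 =P k) => [[e]|ne].
      by subst j; rewrite cls0 /= negbK; case: (odd n).
    by rewrite (cls_ge2 j.+3) //= !negbK; case: (odd j).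
-
  case: j hj Ej => [|[|j]] hj Ej /=.
  + rewrite cls0; case on: (odd n) => // _ _.
    exists ord_max; split; first by apply: vv_val; rewrite /= subSS subSS subn1.
    by rewrite /Tv /= on /= /highN eqxx -(Ej 0).
  + by [].
  + rewrite (cls_ge2 j.+2) //; case: (j.+3 =P k) => [[e]|ne].
      by subst j; rewrite cls0 /= negbK; case: (odd n).
    by rewrite (cls_ge2 j.+3) //= !negbK; case: (odd j).
-
  case: j hj Ej => [|[|j]] hj Ej //= _ _.
  have hq : j < n.+1 by lia.
  exists (Ordinal hq); split; first by apply: vv_val; rewrite /= ?subSS ?subn0.
  by rewrite /Tv /= -(Ej j.+2).
Qed.

Lemma TT1 (c : nat) (q : 'I_n.+1) : c < 3 ->
  (exists q' : 'I_n.+1, Tv c q = inr q' /\ Tv c q' = inr q) \/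
  (exists j : 'I_k, [/\ Tv c q = gad j t2, c != cls j, c != cls (ordS j) & Tc c j = inr q]).
Proof.
case: q => q hq /=.
have Eq : forall r, r = q -> vv r = inr (Ordinal hq) by move=> r e; exact: (vv_val (Ordinal hq) r e).
move=> c3; case: (ltnP c 2) => hc; last first.
  have -> : c = 2 by lia.
  right; have hj : q.+2 < k by lia.
  exists (Ordinal hj); split.
  - by rewrite /Tv /=; apply: (cj_val (Ordinal hj)).
  - by rewrite /= cls_ge2 //; case: (odd _).
  - have -> : (Ordinal hj).+1 %% k = if q.+3 == k then 0 else q.+3 by exact: (val_ordS (Ordinal hj)).
    by case: ifP => _; [rewrite cls0 | rewrite cls_ge2 //]; case: (odd _).
  - by rewrite /Tc /=; apply: Eq; lia.
have c2 : (c == 2) = false by apply/negbTE; lia.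
rewrite /Tv c2; case E: (odd q == (c == 1)).
- case: q hq Eq E => [|q] hq Eq E.
  + right; have hj : 1 < k by [].
    exists (Ordinal hj); split.
    * by rewrite /lowN /=; apply: (cj_val (Ordinal hj)).
    * by rewrite cls1; lia.
    * have -> : (Ordinal hj).+1 %% k = 2 by rewrite /= modn_small.
      by rewrite /cls /=; move: E hc; case: c {c2 c3} => [|[|]] //.
    * by rewrite /Tc c2 /=; apply: Eq.
  + left; have hq' : q < n.+1 by lia.
    exists (Ordinal hq'); split; first by rewrite /lowN /=; apply: (vv_val (Ordinal hq')).
    rewrite /=.
    have -> : (odd q == (c == 1)) = false by move: E => /=; case: (odd q); case: (c == 1).
    rewrite /highN; have -> : (q.+1 == k - 2) = false by apply/negbTE; lia.
    exact: Eq.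
- case: (q.+1 =P k - 2) => [e|ne].
  + right; have hj : 0 < k by [].
    have qn : q = n by lia.
    exists (Ordinal hj); split.
    * by rewrite /highN e eqxx; apply: (cj_val (Ordinal hj)).
    * rewrite /= cls0; move: E; rewrite qn; case: (odd n); case: c {c2 c3} hc => [|[|]] //.
    * have -> : (Ordinal hj).+1 %% k = 1 by rewrite /= modn_small.
      by rewrite cls1; lia.
    * by rewrite /Tc c2 /=; apply: Eq; lia.
  + left; have hq' : q.+1 < n.+1 by lia.
    exists (Ordinal hq'); split.
      rewrite /highN; have -> : (q.+1 == k - 2) = false by apply/negbTE/eqP.
      exact: (vv_val (Ordinal hq')).
    rewrite /=.
    have -> : (~~ odd q == (c == 1)) = true by move: E => /=; case: (odd q); case: (c == 1).
    by rewrite /lowN /=; apply: Eq.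
Qed.

Lemma m2_lt (m : 'I_6) : m %/ 2 < 3.
Proof. by case: m => [[|[|[|[|[|[|]]]]]]]. Qed.

Lemma xb1 i : x1 i = xb i true. Proof. by []. Qed.
Lemma yb1 i : y1 i = yb i true. Proof. by []. Qed.
Lemma tbb b : tb (b == true) = tb b. Proof. by case: b. Qed.

Lemma Pinv_hv m i w : valid i w -> P m (P m (hv i w)) = hv i w.
Proof.
move=> hw; rewrite P_hv //.
have pp2 : pp i m (pp i m w) = w by rewrite /pp pinv.
case: (boolP (valid i (pp i m w))) => hq.
  by rewrite Phw_in // P_hv // Phw_in ?pp2.
case/orP: (not_valid_xy _ _ hq) => /eqP e.
- rewrite Phw_x //.
  have gw : g i w (x i) by rewrite -e /pp padj.
  have wy : w != y i by case/andP: hw.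
  have ppx : pp i m (x i) = w by rewrite -e pp2.
  have [b ew] : exists b, w = xb i b.
    by case/orP: (x_or _ _ gw wy) => /eqP ->; [exists false | exists true].
  rewrite ew xb1 xb_eq tbb P_gad /Pab.
  have xa : xact (ordS (ord_pred i)) m b by rewrite ord_predK xactE ppx ew.
  case: ifP => [ya|_]; first by case: (act_C2 _ _ _ ya xa).
  by rewrite xa ord_predK.
- rewrite Phw_y //.
  have gw : g i w (y i) by rewrite -e /pp padj.
  have wx : w != x i by case/andP: hw.
  have ppy : pp i m (y i) = w by rewrite -e pp2.
  have [b ew] : exists b, w = yb i b.
    by case/orP: (y_or _ _ gw wx) => /eqP ->; [exists false | exists true].
  rewrite ew yb1 yb_eq tbb P_gad /Pab.
  have ya : yact i m b by rewrite yactE ppy ew.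
  by rewrite ya.
Qed.

Lemma Pinv_gad m j b : P m (P m (gad j (tb b))) = gad j (tb b).
Proof.
rewrite P_gad /Pab; case: ifP => ya.
  rewrite P_hv ?yb_valid // Phw_y; first by rewrite yb1 yb_eq tbb.
  by move: ya; rewrite yactE => /eqP <-; rewrite /pp pinv.
case: ifP => xa.
  rewrite P_hv ?xb_valid // Phw_x; first by rewrite ordSK xb1 xb_eq tbb.
  by move: xa; rewrite xactE => /eqP <-; rewrite /pp pinv.
rewrite P_gad2 /Pc.
case: b ya xa => ya xa; last by rewrite /aout ya xa.
have af : aout j m false by apply: aout_false_or; rewrite /aout ya xa.
by rewrite af /aout ya xa.
Qed.

Lemma Pinv_gad2 m j : P m (P m (gad j t2)) = gad j t2.
Proof.
rewrite P_gad2 /Pc; case: ifP => a0.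
  rewrite -[t0]/(tb false) P_gad /Pab.
  by move: a0; rewrite /aout negb_or => /andP[/negbTE -> /negbTE ->].
case: ifP => a1.
  rewrite -[t1]/(tb true) P_gad /Pab.
  by move: a1; rewrite /aout negb_or => /andP[/negbTE -> /negbTE ->].
have /andP[h1 h2] := aout_both j m (negbFE a0) (negbFE a1).
have [q [-> e]] := TT2 (m %/ 2) j (m2_lt m) h1 h2.
exact: e.
Qed.

Lemma Pinv_v m (q : 'I_n.+1) : P m (P m (inr q)) = inr q.
Proof.
change (P m (Tv (m %/ 2) q) = inr q).
case: (TT1 (m %/ 2) q (m2_lt m)) => [[q' [-> e]]|[j [-> h1 h2 e]]].
  exact: e.
rewrite P_gad2 /Pc.
by have /andP[-> ->] := active_aout j m h1 h2.
Qed.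

Lemma Pinv m : involutive (P m).
Proof.
move=> [[h|[j t]]|q].
- rewrite -(hvK h); apply: Pinv_hv; exact: (valP h).
- case: t => [[|[|[|t]]] ht] //.
  + have -> : Ordinal ht = tb false by apply: val_inj.
    exact: Pinv_gad.
  + have -> : Ordinal ht = tb true by apply: val_inj.
    exact: Pinv_gad.
  + have -> : Ordinal ht = t2 by apply: val_inj.
    exact: Pinv_gad2.
- exact: Pinv_v.
Qed.

Notation MG := (Mgraph g x y x0 x1 y0 y1).

Lemma MG_sym u w : MG u w = MG w u.
Proof. by rewrite /Mgraph orbC. Qed.

Lemma adj_hv m i w : valid i w -> MG (hv i w) (P m (hv i w)).
Proof.
move=> hw; rewrite P_hv //.
have pp2 : pp i m (pp i m w) = w by rewrite /pp pinv.
case: (boolP (valid i (pp i m w))) => hq.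
  rewrite Phw_in // /Mgraph (hvE _ _ hw) (hvE _ _ hq) /=.
  by rewrite eqxx tagged_asE /pp padj.
case/orP: (not_valid_xy _ _ hq) => /eqP e.
- rewrite Phw_x //.
  have gw : g i w (x i) by rewrite -e /pp padj.
  have wy : w != y i by case/andP: hw.
  have [b ew] : exists b, w = xb i b.
    by case/orP: (x_or _ _ gw wy) => /eqP ->; [exists false | exists true].
  rewrite ew xb1 xb_eq tbb /Mgraph (hvE _ _ (xb_valid i b)) /= ord_predK.
  by case: b {ew} => /=; rewrite eqxx ?orbT.
- rewrite Phw_y //.
  have gw : g i w (y i) by rewrite -e /pp padj.
  have wx : w != x i by case/andP: hw.
  have [b ew] : exists b, w = yb i b.
    by case/orP: (y_or _ _ gw wx) => /eqP ->; [exists false | exists true].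
  rewrite ew yb1 yb_eq tbb /Mgraph (hvE _ _ (yb_valid i b)) /=.
  by case: b {ew} => /=; rewrite eqxx ?orbT.
Qed.

Lemma adj_gad m j b : MG (gad j (tb b)) (P m (gad j (tb b))).
Proof.
rewrite P_gad /Pab; case: ifP => ya.
  rewrite MG_sym /Mgraph (hvE _ _ (yb_valid j b)) /=.
  by case: b {ya} => /=; rewrite eqxx ?orbT.
case: ifP => xa.
  rewrite MG_sym /Mgraph (hvE _ _ (xb_valid _ b)) /=.
  by case: b {ya xa} => /=; rewrite eqxx ?orbT.
by rewrite /Mgraph /=; case: b {ya xa} => /=; rewrite eqxx.
Qed.

Lemma adj_inv m u : MG (P m u) (P m (P m u)) -> MG u (P m u).
Proof. by rewrite Pinv MG_sym. Qed.

Lemma adj_Tv c (q : 'I_n.+1) : MG (inr q) (Tv c q).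
Proof.
case: q => q hq; rewrite /Tv /=.
case: ifP => _.
  by rewrite /Mgraph /cj /= inordK /=; [lia | lia].
case: ifP => _.
  rewrite /lowN; case: ifP => [/eqP q0|q0].
    by subst q; rewrite /Mgraph /cj /= inordK.
  by rewrite /Mgraph /vv /= inordK /=; lia.
rewrite /highN; case: ifP => [/eqP qn|qn].
  by rewrite /Mgraph /cj /= inordK /=; lia.
by rewrite /Mgraph /vv /= inordK /=; lia.
Qed.

Lemma Madj m u : MG u (P m u).
Proof.
move: u => [[h|[j t]]|q].
- rewrite -(hvK h); apply: adj_hv; exact: (valP h).
- case: t => [[|[|[|t]]] ht] //.
  + have -> : Ordinal ht = tb false by apply: val_inj.
    exact: adj_gad.
  + have -> : Ordinal ht = tb true by apply: val_inj.
    exact: adj_gad.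
  + have -> : Ordinal ht = t2 by apply: val_inj.
    apply: adj_inv; rewrite P_gad2 /Pc.
    case: ifP => _; first by rewrite -[t0]/(tb false); exact: adj_gad.
    case: ifP => _; first by rewrite -[t1]/(tb true); exact: adj_gad.
    exact: adj_Tv.
- exact: adj_Tv.
Qed.

Lemma cnt_sym u w : #|[set m | P m u == w]| = #|[set m | P m w == u]|.
Proof. by apply: eq_card => m; rewrite !inE; apply/eqP/eqP => <-; rewrite Pinv. Qed.

Lemma cnt_HH i a b : valid i a -> valid i b -> g i a b ->
  #|[set m | P m (hv i a) == hv i b]| = 2.
Proof.
move=> ha hb gab.
transitivity #|[set m | p i (sg i m) a == b]|.
  apply: eq_card => m; rewrite !inE P_hv //.
  case: (boolP (valid i (pp i m a))) => hq; first by rewrite Phw_in // hv_inj.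
  have nb : pp i m a != b by apply: contraNneq hq => ->.
  rewrite /pp in nb; rewrite (negbTE nb).
  by case/orP: (not_valid_xy _ _ hq) => /eqP e; [rewrite Phw_x // | rewrite Phw_y //];
     rewrite (hvE _ _ hb).
rewrite (sg_card i (fun l => p i l a == b)); exact: pcnt.
Qed.

Lemma gad_eq j t j' t' : (gad j t == gad j' t') = (j == j') && (t == t').
Proof. by []. Qed.

Lemma cnt_Hy j b : #|[set m | P m (hv j (yb j b)) == gad j (tb b)]| = 2.
Proof.
transitivity #|[set m | p j (sg j m) (yb j b) == y j]|.
  apply: eq_card => m; rewrite !inE P_hv ?yb_valid //.
  case: (boolP (valid j (pp j m (yb j b)))) => hq.
    rewrite -/(pp j m (yb j b)); case/andP: (hq) => _ /negbTE ->.
    by rewrite Phw_in // (hvE _ _ hq).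
  case/orP: (not_valid_xy _ _ hq) => /eqP e.
    rewrite Phw_x // gad_eq (negbTE (ordP_neq j)) /=.
    by rewrite -/(pp j m (yb j b)) e (negbTE (xy_neq j)).
  by rewrite Phw_y // gad_eq yb1 yb_eq tbb !eqxx -/(pp j m (yb j b)) e eqxx.
rewrite (sg_card j (fun l => p j l (yb j b) == y j)); apply: pcnt.
by rewrite gsym gyb.
Qed.

Lemma cnt_Hx j b : #|[set m | P m (hv (ordS j) (xb (ordS j) b)) == gad j (tb b)]| = 2.
Proof.
set i := ordS j.
transitivity #|[set m | p i (sg i m) (xb i b) == x i]|.
  apply: eq_card => m; rewrite !inE P_hv ?xb_valid //.
  case: (boolP (valid i (pp i m (xb i b)))) => hq.
    rewrite -/(pp i m (xb i b)); case/andP: (hq) => /negbTE -> _.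
    by rewrite Phw_in // (hvE _ _ hq).
  case/orP: (not_valid_xy _ _ hq) => /eqP e.
    by rewrite Phw_x // /i ordSK gad_eq xb1 xb_eq tbb !eqxx -/(pp i m (xb i b)) e eqxx.
  rewrite Phw_y // gad_eq (negbTE (ordS_neq j)) /=.
  by rewrite -/(pp i m (xb i b)) e eq_sym (negbTE (xy_neq i)).
rewrite (sg_card i (fun l => p i l (xb i b) == x i)); apply: pcnt.
by rewrite gsym gxb.
Qed.

Lemma cnt_gc j b : #|[set m | P m (gad j (tb b)) == gad j t2]| = 2.
Proof.
have e : [set m | P m (gad j (tb b)) == gad j t2] =
         ~: ([set m | yact j m b] :|: [set m | xact (ordS j) m b]).
  apply/setP => m; rewrite !inE P_gad /Pab negb_or.
  case: ifP => ya /=; first by rewrite (hvE _ _ (yb_valid j b)).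
  case: ifP => xa /=; first by rewrite (hvE _ _ (xb_valid _ b)).
  by rewrite eqxx.
have cy : #|[set m | yact j m b]| = 2.
  transitivity #|[set m | p j (sg j m) (y j) == yb j b]|.
    by apply: eq_card => m; rewrite !inE yactE.
  rewrite (sg_card j (fun l => p j l (y j) == yb j b)); apply: pcnt; exact: gyb.
have cx : #|[set m | xact (ordS j) m b]| = 2.
  transitivity #|[set m | p (ordS j) (sg (ordS j) m) (x (ordS j)) == xb (ordS j) b]|.
    by apply: eq_card => m; rewrite !inE xactE.
  rewrite (sg_card (ordS j) (fun l => p (ordS j) l (x (ordS j)) == xb (ordS j) b)).
  apply: pcnt; exact: gxb.
have ci : [set m | yact j m b] :&: [set m | xact (ordS j) m b] = set0.
  apply/setP => m; rewrite !inE; apply/negbTE/negP => /andP[h1 h2].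
  exact: (act_C2 _ _ _ h1 h2).
have := cardsC ([set m | yact j m b] :|: [set m | xact (ordS j) m b]).
rewrite card_ord cardsU ci cards0 cy cx -e; lia.
Qed.

Lemma card_cls c : c < 3 -> #|[set m : 'I_6 | m %/ 2 == c]| = 2.
Proof. by rewrite (c6 (fun m => m %/ 2 == c)); case: c => [|[|[|]]]. Qed.

Lemma cj_eq a b : a < k -> b < k -> (cj a == cj b) = (a == b).
Proof.
move=> ha hb; apply/eqP/eqP => [[/(congr1 val)]|->] //.
by rewrite /= !inordK.
Qed.
Lemma vv_eq a b : a < n.+1 -> b < n.+1 -> (vv a == vv b) = (a == b).
Proof.
move=> ha hb; apply/eqP/eqP => [[/(congr1 val)]|->] //.
by rewrite /= !inordK.
Qed.

Lemma nb_distinct (q : 'I_n.+1) :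
  [/\ lowN q != highN q, lowN q != cj q.+2 & highN q != cj q.+2].
Proof.
case: q => q hq /=; rewrite /lowN /highN.
case: ifP => [/eqP q0|q0]; case: ifP => [/eqP qn|qn]; split => //;
  rewrite ?cj_eq ?vv_eq //; lia.
Qed.

Lemma cnt_via (q : 'I_n.+1) (t : MV) (c0 : nat) : c0 < 3 ->
  (forall c, c < 3 -> (Tv c q == t) = (c == c0)) -> #|[set m | P m (inr q) == t]| = 2.
Proof.
move=> hc0 H; apply: etrans (card_cls _ hc0); apply: eq_card => m; rewrite !inE.
exact: (H _ (m2_lt m)).
Qed.

Lemma cnt_pend (q : 'I_n.+1) : #|[set m | P m (inr q) == cj q.+2]| = 2.
Proof.
apply: (cnt_via q _ 2) => // c hc; case: (nb_distinct q) => d1 d2 d3.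
rewrite /Tv; case: c hc => [|[|[|]]] // _ /=; rewrite ?eqxx //; case: ifP => _;
  by rewrite ?(negbTE d2) ?(negbTE d3).
Qed.

Lemma cnt_low (q : 'I_n.+1) : #|[set m | P m (inr q) == lowN q]| = 2.
Proof.
apply: (cnt_via q _ (if odd q then 1 else 0)); first by case: (odd q).
move=> c hc; case: (nb_distinct q) => d1 d2 d3.
rewrite /Tv; case: c hc => [|[|[|]]] // _ /=; case: (odd q) => /=;
  by rewrite ?eqxx // eq_sym ?(negbTE d1) ?(negbTE d2).
Qed.

Lemma cnt_high (q : 'I_n.+1) : #|[set m | P m (inr q) == highN q]| = 2.
Proof.
apply: (cnt_via q _ (if odd q then 0 else 1)); first by case: (odd q).
move=> c hc; case: (nb_distinct q) => d1 d2 d3.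
rewrite /Tv; case: c hc => [|[|[|]]] // _ /=; case: (odd q) => /=;
  by rewrite ?eqxx // ?(negbTE d1) // eq_sym ?(negbTE d3).
Qed.

Lemma hv_of (h : HS) (i : 'I_k) (a : V i) : val h = Tagged V a -> hv i a = inl (inl h).
Proof. by move=> e; rewrite /hv -e valK. Qed.

Lemma cnt_Hgad i a (ha : valid i a) j b :
  (Tagged V a == Tagged V (yb j b)) || (Tagged V a == Tagged V (xb (ordS j) b)) ->
  #|[set m | P m (hv i a) == gad j (tb b)]| = 2.
Proof.
case/orP => /eqP E; have ij := congr1 tag E; simpl in ij; subst i.
  by rewrite (Tagged_inj _ _ _ E); exact: cnt_Hy.
by rewrite (Tagged_inj _ _ _ E); exact: cnt_Hx.
Qed.

Lemma cnt_base u w : Mbase g x0 x1 y0 y1 u w -> #|[set m | P m u == w]| = 2.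
Proof.
move: u w => [[h|[j t]]|q] [[h'|[j' t']]|q'] H; simpl in H => //.
- case: h H => [[i a] ha]; case: h' => [[i' a'] ha'] H; simpl in H.
  case/andP: H => /eqP ii' gaa'.
  subst i'; rewrite tagged_asE in gaa'.
  match goal with |- context [P _ (inl (inl ?h0)) == inl (inl ?h1)] =>
    rewrite -(hv_of h0 i a erefl) -(hv_of h1 i a' erefl) end.
  exact: cnt_HH.
- case: h H => [[i a] ha] H; simpl in H.
  match goal with |- context [P _ (inl (inl ?h0))] => rewrite -(hv_of h0 i a erefl) end.
  case/orP: H => /andP[/eqP t0 E].
    have -> : t' = tb false by apply: val_inj.
    exact: (cnt_Hgad _ _ ha j' false E).
  have -> : t' = tb true by apply: val_inj.
  exact: (cnt_Hgad _ _ ha j' true E).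
- move: H; rewrite orbF.
  case/orP => /andP[/andP[/eqP jj /eqP tt] /eqP tt']; subst j'.
    have -> : t = tb false by apply: val_inj.
    have -> : t' = t2 by apply: val_inj.
    exact: cnt_gc.
  have -> : t = tb true by apply: val_inj.
  have -> : t' = t2 by apply: val_inj.
  exact: cnt_gc.
- case/andP: H => /eqP tt H; rewrite cnt_sym.
  have -> : t = t2 by apply: val_inj.
  rewrite -/(gad j t2).
  case/or3P: H => /andP[/eqP jv /eqP qv].
  + have -> : gad j t2 = lowN q' by rewrite /lowN qv /=; apply/esym/cj_val; rewrite jv.
    exact: cnt_low.
  + have -> : gad j t2 = highN q'.
      rewrite /highN qv ifT; last by apply/eqP; lia.
      by apply/esym/cj_val; rewrite jv.
    exact: cnt_high.
  + have -> : gad j t2 = cj q'.+2.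
      by apply/esym/cj_val; rewrite qv; lia.
    exact: cnt_pend.
- have -> : inr q' = highN q.
    rewrite /highN; case: ifP => [/eqP e|_]; first by move: (ltn_ord q'); move/eqP: H; lia.
    by apply/esym/vv_val/eqP.
  exact: cnt_high.
Qed.

Lemma Mcnt u w : MG u w -> #|[set m | P m u == w]| = 2.
Proof. by case/orP => [/cnt_base //|/cnt_base]; rewrite cnt_sym. Qed.

Lemma MG_irr : irreflexive MG.
Proof.
move=> [[h|[j t]]|q]; rewrite /Mgraph orbb //=.
- by case: h => [[i a] ha] /=; rewrite eqxx tagged_asE girr.
- by rewrite eqxx /=; case: t => [[|[|[|]]] ?].
- by apply/negbTE; rewrite -(eqn_add2r 0); lia.
Qed.

Lemma MG_sym' : symmetric MG.
Proof. exact: MG_sym. Qed.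

Lemma main_cover : has_fulkerson_cover MG.
Proof. exact: (@fulk_of _ _ MG_irr P Pinv Madj Mcnt). Qed.
End Main.

Lemma card3 (T : finType) (a b c : T) : #|[set a; b; c]| = 3 -> [/\ a != b, a != c & b != c].
Proof.
move=> h.
have c2 (u w : T) : #|[set u; w]| <= 2 by rewrite cards2; case: (u != w).
have E (u w z : T) : z \in [set u; w] -> [set u; w; z] = [set u; w].
  move=> hz; apply/setP => v; rewrite !inE.
  by case: (v =P z) => [->|_]; rewrite ?orbF // -(in_set2 z u w) hz orbT.
split; apply/negP => /eqP e.
- have : [set a; b; c] = [set b; c].
    by apply/setP => v; rewrite !inE e; case: (v == b); case: (v == c).
  by move=> hh; move: h (c2 b c); rewrite hh => ->.
- have : [set a; b; c] = [set a; b] by rewrite E // e !inE eqxx.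
  by move=> hh; move: h (c2 a b); rewrite hh => ->.
- have : [set a; b; c] = [set a; b] by rewrite E // e !inE eqxx orbT.
  by move=> hh; move: h (c2 a b); rewrite hh => ->.
Qed.

Theorem theorem1p3 (k : nat) (V : 'I_k -> finType) (g : forall i, rel (V i))
  (x y x0 x1 y0 y1 : forall i, V i) :
  3 <= k ->
  (forall i, simple_graph (g i)) ->
  (forall i, cubic (g i)) ->
  (forall i, bridgeless (g i)) ->
  (forall i, cyclically_4_edge_connected (g i)) ->
  (forall i, has_fulkerson_cover (g i)) ->
  (* x_i y_i is an edge; x_i^0, x_i^1 are the neighbours of x_i other than y_i *)
  (forall i, [set w | g i (x i) w] = [set y i; x0 i; x1 i]) ->
  (* y_i^0, y_i^1 are the neighbours of y_i other than x_i *)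
  (forall i, [set w | g i (y i) w] = [set x i; y0 i; y1 i]) ->
  has_fulkerson_cover (Mgraph g x y x0 x1 y0 y1).
Proof.
move: V g x y x0 x1 y0 y1; case: k => [|[|[|n]]] V g x y x0 x1 y0 y1 hk //.
move=> Hs Hc _ _ Hf Hx Hy.
have gsym i : symmetric (g i) by case: (Hs i).
have girr i : irreflexive (g i) by case: (Hs i).
have Nx i w : g i (x i) w = (w \in [set y i; x0 i; x1 i]) by rewrite -Hx inE.
have Ny i w : g i (y i) w = (w \in [set x i; y0 i; y1 i]) by rewrite -Hy inE.
have dx i : [/\ y i != x0 i, y i != x1 i & x0 i != x1 i] by apply: card3; rewrite -Hx Hc.
have dy i : [/\ x i != y0 i, x i != y1 i & y0 i != y1 i] by apply: card3; rewrite -Hy Hc.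
have Hf' : forall i, exists M : 'I_6 -> {set {set V i}}, fulkerson_cover (g i) M := Hf.
have [M HM] := fin_all_exists Hf'.
pose p i l := ptn (M i l).
have pm i l : perfect_matching (g i) (M i l) by case: (HM i) => h _; exact: h l.
have pinv i l : involutive (p i l) := ptn_inv (girr i) (pm i l).
have padj i l w : g i w (p i l w) := ptn_adj (gsym i) (girr i) (pm i l) w.
have pcnt i u w : g i u w -> #|[set l | p i l u == w]| = 2.
  move=> guw; case: (HM i) => _ Hc2.
  have Ein : [set u; w] \in edges (g i).
    by rewrite inE; apply/existsP; exists u; apply/existsP; exists w; rewrite guw eqxx.
  have uw : u != w by apply: contraTneq guw => ->; rewrite girr.
  apply: etrans (Hc2 _ Ein); apply: eq_card => l; rewrite !inE.
  by rewrite (ptnP (girr i) (pm i l) uw).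
have [sg Hsg] := fin_all_exists (sg_exists Nx Ny dx dy pinv padj pcnt).
exact: (@main_cover n V g x y x0 x1 y0 y1 gsym girr Nx Ny dx dy p pinv padj pcnt sg
  (fun i => proj1 (Hsg i)) (fun i => proj2 (Hsg i))).
Qed.
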